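(* Let $\kappa>0$, $u_0>0$, and let $u$ be the solution of $\frac{d}{dr}\big(u'/\sqrt{1+u'^2}\big)=\kappa u$, $u(0)=u_0$, $u'(0)=0$. Let $a>0$ and $0\le\gamma<\pi/2$ be such that $u$ is defined on $[0,a)$ and $\sin\psi(a)=\cos\gamma$, where $\sin\psi=u'/\sqrt{1+u'^2}$ (extended continuously to $r=a$). Then $$\frac{\cos\gamma}{a\kappa}-\frac a{\cos\gamma}+\frac{a\tan\gamma}2+\frac a{2\cos^2\gamma}\Big(\frac\pi2-\gamma\Big)<u_0<u_0^+<\frac{\cos\gamma}{a\kappa},$$ where $u_0^+$ is the number with $F(u_0^+;1/(\kappa u_0))=\cos\gamma/\kappa$, for $$F(x;R)=a(R+x)-\frac a2\sqrt{R^2-a^2}-\frac{R^2}2\arcsin\Big(\frac aR\Big).$$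
   Context: $u$ is the profile of a $\kappa$-cylindrical capillary surface $z=u(x)$ between vertical plates $x=\pm a$ with contact angle $\gamma$; $u_0$ is the center height. The function $x\mapsto F(x;R)$ is strictly increasing. *)

(* Defs.v *)
From Stdlib Require Import Reals.
From Coquelicot Require Import Coquelicot.
Open Scope R_scope.

Definition sin_psi (u : R -> R) (r : R) : R :=
  Derive u r / sqrt (1 + (Derive u r) ^ 2).

Definition capillary_profile (kappa u0 a gamma : R) (u : R -> R) : Prop :=
  (forall r, -a < r < a -> ex_derive u r) /\
  (forall r, -a < r < a -> is_derive (sin_psi u) r (kappa * u r)) /\
  u 0 = u0 /\ Derive u 0 = 0 /\
  filterlim (sin_psi u) (at_left a) (locally (cos gamma)).

Definition F (a x Rr : R) : R :=
  a * (Rr + x) - a / 2 * sqrt (Rr ^ 2 - a ^ 2) - Rr ^ 2 / 2 * asin (a / Rr).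

(* Main.v *)
Require Import Defs.
From Stdlib Require Import Reals Lra.
From Coquelicot Require Import Coquelicot.
Open Scope R_scope.

Lemma ballR x e y : ball x e y <-> Rabs (y - x) < e.
Proof. reflexivity. Qed.

Lemma incr_strict (f df : R -> R) x y : x < y ->
  (forall t, x <= t <= y -> is_derive f t (df t)) ->
  (forall t, x < t < y -> 0 < df t) -> f x < f y.
Proof.
  intros Hxy Hd Hp.
  destruct (MVT_cor2 f df x y Hxy) as [c [Hc1 Hc2]].
  { intros c Hc. apply is_derive_Reals. now apply Hd. }
  specialize (Hp c Hc2). nra.
Qed.

Lemma incr_weak (f df : R -> R) x y : x <= y ->
  (forall t, x <= t <= y -> is_derive f t (df t)) ->
  (forall t, x < t < y -> 0 <= df t) -> f x <= f y.
Proof.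
  intros Hxy Hd Hp. destruct (Req_dec x y) as [->|Hne]; [lra|].
  destruct (MVT_cor2 f df x y ltac:(lra)) as [c [Hc1 Hc2]].
  { intros c Hc. apply is_derive_Reals. now apply Hd. }
  specialize (Hp c Hc2). nra.
Qed.

Lemma const_der (f : R -> R) x y : x <= y ->
  (forall t, x <= t <= y -> is_derive f t 0) -> f x = f y.
Proof.
  intros Hxy Hd. apply Rle_antisym.
  - apply (incr_weak f (fun _ => 0)); auto; intros; lra.
  - assert (- f x <= - f y); [|lra].
    apply (incr_weak (fun t => - f t) (fun _ => 0)); auto; [|intros; lra].
    intros t Ht. replace 0 with (- 0) by lra. apply (is_derive_opp f). now apply Hd.
Qed.

Lemma cR_plus (f g : R -> R) x : continuous f x -> continuous g x -> continuous (fun t => f t + g t) x.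
Proof. exact (continuous_plus f g x). Qed.
Lemma cR_minus (f g : R -> R) x : continuous f x -> continuous g x -> continuous (fun t => f t - g t) x.
Proof. exact (continuous_minus f g x). Qed.
Lemma cR_mult (f g : R -> R) x : continuous f x -> continuous g x -> continuous (fun t => f t * g t) x.
Proof. exact (continuous_mult f g x). Qed.
Lemma cR_comp (f g : R -> R) x : continuous f x -> continuous g (f x) -> continuous (fun t => g (f t)) x.
Proof. exact (continuous_comp f g x). Qed.

Lemma is_derive_asin x : -1 < x < 1 -> is_derive asin x (1 / sqrt (1 - x ^ 2)).
Proof.
  intros H. apply is_derive_Reals.
  apply derive_pt_eq_1 with (derivable_pt_asin x H).
  rewrite derive_pt_asin. unfold Rsqr. f_equal. f_equal. ring.
Qed.

Lemma asin_cont1 : continuous asin 1.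
Proof.
  apply (proj2 (@filterlim_locally R R_UniformSpace (locally 1) _ asin (asin 1))).
  intros eps. rewrite asin_1.
  set (e := Rmin eps (PI/2) / 2).
  assert (Hpi := PI_RGT_0).
  assert (He0 : 0 < e) by (unfold e; apply Rdiv_lt_0_compat; [apply Rmin_pos; [apply cond_pos|lra]|lra]).
  assert (He1 : e < eps) by (unfold e; pose proof (Rmin_l eps (PI/2)); pose proof (cond_pos eps); lra).
  assert (He2 : e < PI/2) by (unfold e; pose proof (Rmin_r eps (PI/2)); lra).
  set (th := PI/2 - e).
  assert (Hs1 : sin th < 1).
  { rewrite <- sin_PI2. apply sin_increasing_1; unfold th; lra. }
  assert (Hs0 : 0 < sin th).
  { apply sin_gt_0; unfold th; lra. }
  assert (Hd : 0 < 1 - sin th) by lra.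
  exists (mkposreal _ Hd). intros x Hx. apply ballR in Hx. simpl in Hx.
  apply ballR.
  destruct (Rle_dec 1 x) as [H1|H1].
  - unfold asin. destruct (Rle_dec x (-1)) as [Hm|Hm]. { lra. } destruct (Rle_dec 1 x) as [Hm2|Hm2]; [|lra].
    replace (PI / 2 - PI / 2) with 0 by ring. rewrite Rabs_R0. apply cond_pos.
  - change (Rabs (x - 1) < 1 - sin th) in Hx. assert (Hx1 : sin th < x) by (apply Rabs_lt_between in Hx; lra).
    pose proof (asin_bound x) as Hb.
    assert (th <= asin x).
    { destruct (Rle_dec th (asin x)) as [|Hn]; auto.
      assert (sin (asin x) < sin th) by (apply sin_increasing_1; unfold th in *; lra).
      rewrite sin_asin in H; lra. }
    rewrite Rabs_left1; unfold th in *; lra.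
Qed.

Lemma asin_cont x : 0 < x <= 1 -> continuous asin x.
Proof.
  intros H. destruct (Req_dec x 1) as [->|Hn]; [apply asin_cont1|].
  apply (@ex_derive_continuous R_AbsRing R_NormedModule asin x). eexists. apply is_derive_asin. lra.
Qed.
Lemma near_left (f g : R -> R) a c l eps : c < a -> 0 < eps ->
  filterlim f (at_left a) (locally l) -> continuous g a ->
  exists b, c <= b < a /\ Rabs (f b - l) < eps /\ Rabs (g b - g a) < eps.
Proof.
  intros Hc He Hf Hg.
  pose proof (proj1 (@filterlim_locally R R_UniformSpace (at_left a) _ f l) Hf (mkposreal eps He)) as Hf'.
  pose proof (proj1 (@filterlim_locally R R_UniformSpace (locally a) _ g (g a)) Hg (mkposreal eps He)) as Hg'.
  clear Hf Hg. rename Hf' into Hf. rename Hg' into Hg.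
  destruct Hf as [d1 Hd1]. destruct Hg as [d2 Hd2].
  set (d := Rmin d1 d2).
  assert (0 < d) by (unfold d; apply Rmin_pos; apply cond_pos).
  set (b := Rmax c (a - d / 2)).
  assert (Hb1 : c <= b) by apply Rmax_l.
  assert (Hb2 : a - d/2 <= b) by apply Rmax_r.
  assert (Hb3 : b < a) by (unfold b; apply Rmax_lub_lt; lra).
  assert (Hd1' : d <= d1) by apply Rmin_l.
  assert (Hd2' : d <= d2) by apply Rmin_r.
  exists b. split; [lra|]. split.
  - apply Hd1; [apply ballR; rewrite Rabs_left; lra | lra].
  - apply Hd2. apply ballR; rewrite Rabs_left; lra.
Qed.

Lemma phi_lt p q : 0 <= p -> p < q -> q < 1 ->
  p / sqrt (1 - p ^ 2) < q / sqrt (1 - q ^ 2).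
Proof.
  intros H0 H1 H2.
  assert (HB : 0 < sqrt (1 - q ^ 2)) by (apply sqrt_lt_R0; nra).
  assert (HAB : sqrt (1 - q ^ 2) < sqrt (1 - p ^ 2)) by (apply sqrt_lt_1; nra).
  set (A := sqrt (1 - p ^ 2)) in *. set (B := sqrt (1 - q ^ 2)) in *.
  apply (Rmult_lt_reg_r (A * B)); [nra|].
  replace (p / A * (A * B)) with (p * B) by (field; lra).
  replace (q / B * (A * B)) with (q * A) by (field; lra).
  nra.
Qed.

Lemma sp_alg d : 0 < 1 - (d / sqrt (1 + d ^ 2)) ^ 2 /\
  d = (d / sqrt (1 + d ^ 2)) / sqrt (1 - (d / sqrt (1 + d ^ 2)) ^ 2).
Proof.
  assert (Hq : 0 < sqrt (1 + d ^ 2)) by (apply sqrt_lt_R0; nra).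
  assert (Hq2 : sqrt (1 + d ^ 2) ^ 2 = 1 + d ^ 2) by (apply pow2_sqrt; nra).
  set (q := sqrt (1 + d ^ 2)) in *.
  assert (E : 1 - (d / q) ^ 2 = (1 / q) ^ 2).
  { replace (1 - (d / q) ^ 2) with ((q ^ 2 - d ^ 2) / q ^ 2) by (field; lra).
    replace ((1 / q) ^ 2) with (1 / q ^ 2) by (field; lra).
    rewrite Hq2. field. nra. }
  rewrite E. rewrite sqrt_pow2 by (apply Rlt_le, Rdiv_lt_0_compat; lra).
  split; [apply pow_lt, Rdiv_lt_0_compat; lra | field; lra].
Qed.

Lemma sqrt_circ Rr r : 0 < Rr -> sqrt (1 - (r / Rr) ^ 2) = sqrt (Rr ^ 2 - r ^ 2) / Rr.
Proof.
  intros HR. replace (1 - (r / Rr) ^ 2) with ((Rr ^ 2 - r ^ 2) / Rr ^ 2) by (field; lra).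
  rewrite sqrt_div_alt by (apply pow_lt; lra). rewrite sqrt_pow2; lra.
Qed.

Definition P (Rr r : R) : R := Rr * r - r / 2 * sqrt (Rr ^ 2 - r ^ 2) - Rr ^ 2 / 2 * asin (r / Rr).

Lemma P_derive Rr r : 0 < Rr -> -Rr < r < Rr -> is_derive (P Rr) r (Rr - sqrt (Rr ^ 2 - r ^ 2)).
Proof.
  intros HR Hr. unfold P.
  assert (Ha : is_derive asin (r / Rr) (1 / sqrt (1 - (r / Rr) ^ 2))).
  { apply is_derive_asin. split; [apply Rlt_div_r|apply Rlt_div_l]; lra. }
  auto_derive.
  - split; [nra | split; [eexists; exact Ha | exact I]].
  - set (dd := Derive _ _).
    assert (Hdd : dd = 1 / sqrt (1 - (r / Rr) ^ 2)) by (apply is_derive_unique; exact Ha).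
    rewrite Hdd.
    replace (Rr * (Rr * 1) + - (r * (r * 1))) with (Rr^2 - r^2) by ring.
    change (r * / Rr) with (r / Rr). rewrite sqrt_circ by lra.
    assert (HS : 0 < sqrt (Rr ^ 2 - r ^ 2)) by (apply sqrt_lt_R0; nra).
    assert (HS2 : sqrt (Rr ^ 2 - r ^ 2) ^ 2 = Rr ^ 2 - r ^ 2) by (apply pow2_sqrt; nra).
    set (S := sqrt (Rr ^ 2 - r ^ 2)) in *.
    field_simplify; try lra. replace (-2 * Rr ^ 2 + 4 * Rr * S - 2 * S ^ 2 + 2 * r ^ 2) with (4 * S * (Rr - S)) by nra. field. lra.
Qed.

Lemma dminus (f g : R -> R) t df dg : is_derive f t df -> is_derive g t dg ->
  is_derive (fun x => f x - g x) t (df - dg).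
Proof. intros H1 H2. exact (is_derive_minus f g t df dg H1 H2). Qed.

Lemma dlin c t : is_derive (fun x => c * x) t c.
Proof. auto_derive; auto; ring. Qed.

Lemma cont_lin c t : continuous (fun x => c * x) t.
Proof. apply (@ex_derive_continuous R_AbsRing R_NormedModule). eexists; apply dlin. Qed.

Lemma dcirc c Rr t : 0 < Rr -> -Rr < t < Rr ->
  is_derive (fun x => c + Rr - sqrt (Rr ^ 2 - x ^ 2)) t (t / sqrt (Rr ^ 2 - t ^ 2)).
Proof.
  intros HR Ht. auto_derive.
  - nra.
  - replace (Rr * (Rr * 1) + - (t * (t * 1))) with (Rr ^ 2 - t ^ 2) by ring.
    assert (0 < sqrt (Rr ^ 2 - t ^ 2)) by (apply sqrt_lt_R0; nra). field. lra.
Qed.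

Lemma dg k c Rr t : 0 < Rr -> -Rr < t < Rr ->
  is_derive (fun x => k * (c * x + P Rr x)) t (k * (c + (Rr - sqrt (Rr ^ 2 - t ^ 2)))).
Proof.
  intros HR Ht. pose proof (P_derive Rr t HR Ht) as HP.
  exact (is_derive_scal (fun x => c * x + P Rr x) t k _
    (@is_derive_plus R_AbsRing R_NormedModule (fun x => c * x) (P Rr) t c _ (dlin c t) HP)).
Qed.

Lemma P0 Rr : 0 < Rr -> P Rr 0 = 0.
Proof. intros H. unfold P. replace (0 / Rr) with 0 by (field; lra). rewrite asin_0. unfold Rdiv. rewrite !Rmult_0_r, !Rmult_0_l. ring. Qed.

Lemma F_P a x Rr : F a x Rr = a * x + P Rr a.
Proof. unfold F, P. ring. Qed.

Lemma P_cont Rr x : 0 < Rr -> 0 < x <= Rr -> continuous (P Rr) x.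
Proof.
  intros HR Hx. unfold P.
  apply cR_minus; [apply cR_minus|apply cR_mult].
  - apply (@ex_derive_continuous R_AbsRing R_NormedModule). auto_derive. auto.
  - apply cR_mult; [apply (@ex_derive_continuous R_AbsRing R_NormedModule); auto_derive; auto|].
    apply (cR_comp (fun r => Rr ^ 2 - r ^ 2) sqrt).
    + apply (@ex_derive_continuous R_AbsRing R_NormedModule). auto_derive. auto.
    + apply continuous_sqrt.
  - apply continuous_const.
  - apply (cR_comp (fun r => r / Rr) asin).
    + apply (@ex_derive_continuous R_AbsRing R_NormedModule). auto_derive. lra.
    + apply asin_cont. split; [apply Rdiv_lt_0_compat; lra|]. 
      apply Rle_div_l; lra.
Qed.

Theorem mainTheorem10 (kappa u0 a gamma : R) (u : R -> R) :
  0 < kappa -> 0 < u0 -> 0 < a -> 0 <= gamma < PI / 2 ->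
  capillary_profile kappa u0 a gamma u ->
  cos gamma / (a * kappa) - a / cos gamma + a * tan gamma / 2
    + a / (2 * (cos gamma) ^ 2) * (PI / 2 - gamma) < u0 /\
  (exists u0p, F a u0p (1 / (kappa * u0)) = cos gamma / kappa) /\
  (forall u0p, F a u0p (1 / (kappa * u0)) = cos gamma / kappa ->
     u0 < u0p /\ u0p < cos gamma / (a * kappa)).
Proof.
  intros Hk Hu0 Ha Hg [Hex [Hs [Hu00 [HD0 Hlim]]]].
  set (s := sin_psi u) in *.
  assert (HuD : forall r, -a < r < a -> is_derive u r (Derive u r)).
  { intros r Hr. apply Derive_correct. auto. }
  assert (Halg : forall r, 0 < 1 - (s r) ^ 2 /\ Derive u r = s r / sqrt (1 - (s r) ^ 2)).
  { intro r. unfold s, sin_psi. apply sp_alg. }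
  assert (Hs0 : s 0 = 0).
  { unfold s, sin_psi. rewrite HD0. unfold Rdiv. ring. }
  clearbody s.
  assert (Hcont : forall r, -a < r < a -> continuity_pt u r).
  { intros r Hr. apply continuity_pt_filterlim.
    apply (@ex_derive_continuous R_AbsRing R_NormedModule). auto. }
  assert (HE : forall r, 0 <= r < a -> u0 ^ 2 <= (u r) ^ 2).
  { intros r Hr.
    assert (Heq : kappa * (u 0) ^ 2 / 2 + sqrt (1 - (s 0) ^ 2) = kappa * (u r) ^ 2 / 2 + sqrt (1 - (s r) ^ 2)).
    { apply (const_der (fun t => kappa * (u t) ^ 2 / 2 + sqrt (1 - (s t) ^ 2)) 0 r); [lra|].
      intros t Ht. assert (Hst := Hs t ltac:(lra)). destruct (Halg t) as [Hp Hdu].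
      auto_derive.
      - repeat split; auto. exists (Derive u t). apply HuD. lra. eexists; exact Hst.
      - set (d1 := Derive (fun x => u x) t). set (d2 := Derive (fun x => s x) t).
        assert (E1 : d1 = Derive u t) by reflexivity.
        assert (E2 : d2 = kappa * u t) by (apply is_derive_unique; exact Hst).
        rewrite E1, E2, Hdu. replace (1 + - (s t * (s t * 1))) with (1 - s t ^ 2) by ring.
        assert (0 < sqrt (1 - s t ^ 2)) by (apply sqrt_lt_R0; lra).
        field. lra. }
    rewrite Hs0, Hu00 in Heq. replace (1 - 0 ^ 2) with 1 in Heq by ring. rewrite sqrt_1 in Heq.
    assert (sqrt (1 - s r ^ 2) <= 1).
    { apply Rle_trans with (sqrt 1); [apply sqrt_le_1_alt; pose proof (pow2_ge_0 (s r)); lra | rewrite sqrt_1; lra]. }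
    nra. }
  assert (Hpos : forall r, 0 <= r < a -> u0 <= u r).
  { intros r Hr. destruct (Rle_dec u0 (u r)) as [|Hn]; auto. exfalso.
    pose proof (HE r Hr).
    assert (Hur : u r <= - u0) by nra.
    assert (Hr0 : 0 < r) by (destruct (Req_dec r 0) as [->|]; [rewrite Hu00 in Hn; lra | lra]).
    destruct (Ranalysis5.IVT_interv (fun t => - u t) 0 r) as [z [Hz1 Hz2]].
    - intros t Ht. apply (continuity_pt_opp u). apply Hcont. lra.
    - lra.
    - rewrite Hu00. lra.
    - lra.
    - pose proof (HE z ltac:(lra)). nra. }
  assert (Hspos : forall r, 0 < r < a -> 0 < s r).
  { intros r Hr. rewrite <- Hs0.
    apply (incr_strict s (fun t => kappa * u t)); [lra| |].
    - intros t Ht. apply Hs. lra.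
    - intros t Ht. pose proof (Hpos t ltac:(lra)). nra. }
  assert (HDpos : forall r, 0 < r < a -> 0 < Derive u r).
  { intros r Hr. destruct (Halg r) as [H1 ->]. apply Rdiv_lt_0_compat; [auto|apply sqrt_lt_R0; lra]. }
  assert (Hinc : forall x y, 0 <= x -> x < y -> y < a -> u x < u y).
  { intros x y H1 H2 H3. apply (incr_strict u (Derive u)); [lra| |].
    - intros t Ht. apply HuD. lra.
    - intros t Ht. apply HDpos. lra. }
  assert (Hgt : forall r, 0 < r < a -> u0 < u r).
  { intros r Hr. rewrite <- Hu00. apply Hinc; lra. }
  assert (HL : forall x y, 0 <= x -> x <= y -> y < a -> s x - kappa * u0 * x <= s y - kappa * u0 * y).
  { intros x y H1 H2 H3.
    apply (incr_weak (fun t => s t - kappa * u0 * t) (fun t => kappa * u t - kappa * u0)); [lra| |].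
    - intros t Ht. apply dminus; [apply Hs; lra | apply dlin].
    - intros t Ht. pose proof (Hpos t ltac:(lra)). nra. }
  assert (HLs : forall r, 0 < r < a -> 0 < s r - kappa * u0 * r).
  { intros r Hr. replace 0 with (s 0 - kappa * u0 * 0) by (rewrite Hs0; ring).
    apply (incr_strict (fun t => s t - kappa * u0 * t) (fun t => kappa * u t - kappa * u0)); [lra| |].
    - intros t Ht. apply dminus; [apply Hs; lra | apply dlin].
    - intros t Ht. pose proof (Hgt t ltac:(lra)). nra. }
  assert (HA : kappa * u0 * a < cos gamma).
  { set (m := s (a / 2) - kappa * u0 * (a / 2)).
    assert (Hm : 0 < m) by (apply HLs; lra).
    destruct (near_left s (fun t => kappa * u0 * t) a (a / 2) (cos gamma) (m / 4)) as [b [Hb1 [Hb2 Hb3]]];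
      [lra | lra | exact Hlim | apply cont_lin |].
    pose proof (HL (a / 2) b ltac:(lra) ltac:(lra) ltac:(lra)).
    apply Rabs_def2 in Hb2. apply Rabs_def2 in Hb3. fold m in H. lra. }
  pose proof (COS_bound gamma) as Hcb.
  assert (Hc0 : 0 < cos gamma) by (apply cos_gt_0; lra).
  set (Rr := 1 / (kappa * u0)).
  assert (HRr : 0 < Rr) by (unfold Rr; apply Rdiv_lt_0_compat; nra).
  assert (HaR : a < Rr).
  { unfold Rr. apply Rlt_div_r; nra. }
  assert (HsR : forall r, 0 < r < a -> r / Rr < s r).
  { intros r Hr. replace (r / Rr) with (kappa * u0 * r) by (unfold Rr; field; nra).
    pose proof (HLs r Hr). lra. }
  assert (Hlow : forall r, 0 < r < a -> u0 + Rr - sqrt (Rr ^ 2 - r ^ 2) < u r).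
  { intros r Hr.
    enough (0 < u r - (u0 + Rr - sqrt (Rr ^ 2 - r ^ 2))) by lra.
    replace 0 with (u 0 - (u0 + Rr - sqrt (Rr ^ 2 - 0 ^ 2))) at 1
      by (rewrite Hu00; replace (Rr ^ 2 - 0 ^ 2) with (Rr ^ 2) by ring; rewrite sqrt_pow2; lra).
    apply (incr_strict (fun t => u t - (u0 + Rr - sqrt (Rr ^ 2 - t ^ 2)))
             (fun t => Derive u t - t / sqrt (Rr ^ 2 - t ^ 2))); [lra| |].
    - intros t Ht. apply dminus; [apply HuD; lra | apply dcirc; lra].
    - intros t Ht. destruct (Halg t) as [H1 H2]. rewrite H2.
      assert (HS := sqrt_circ Rr t HRr).
      replace (t / sqrt (Rr ^ 2 - t ^ 2)) with ((t / Rr) / sqrt (1 - (t / Rr) ^ 2)).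
      2:{ rewrite HS. assert (0 < sqrt (Rr ^ 2 - t ^ 2)) by (apply sqrt_lt_R0; nra). field. lra. }
      assert (Hst := HsR t ltac:(lra)). assert (Hsp := Hspos t ltac:(lra)).
      assert (0 <= t / Rr) by (apply Rlt_le, Rdiv_lt_0_compat; lra).
      assert (s t < 1) by nra.
      pose proof (phi_lt (t / Rr) (s t)). lra. }
  assert (HGpos : forall x y, 0 <= x -> x <= y -> y < a ->
     s x - kappa * (u0 * x + P Rr x) <= s y - kappa * (u0 * y + P Rr y)).
  { intros x y H1 H2 H3.
    apply (incr_weak (fun t => s t - kappa * (u0 * t + P Rr t))
      (fun t => kappa * u t - kappa * (u0 + (Rr - sqrt (Rr ^ 2 - t ^ 2))))); [lra| |].
    - intros t Ht. apply dminus; [apply Hs; lra | apply dg; lra].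
    - intros t Ht. pose proof (Hlow t ltac:(lra)). nra. }
  assert (HP0 : forall Rr', 0 < Rr' -> P Rr' 0 = 0).
  { intros Rr' H. apply P0; lra. }
  assert (HGm : 0 < s (a / 2) - kappa * (u0 * (a / 2) + P Rr (a / 2))).
  { replace 0 with (s 0 - kappa * (u0 * 0 + P Rr 0)) by (rewrite Hs0, HP0; auto; ring).
    apply (incr_strict (fun t => s t - kappa * (u0 * t + P Rr t))
      (fun t => kappa * u t - kappa * (u0 + (Rr - sqrt (Rr ^ 2 - t ^ 2))))); [lra| |].
    - intros t Ht. apply dminus; [apply Hs; lra | apply dg; lra].
    - intros t Ht. pose proof (Hlow t ltac:(lra)). nra. }
  assert (HB : kappa * (u0 * a + P Rr a) < cos gamma).
  { set (m := s (a / 2) - kappa * (u0 * (a / 2) + P Rr (a / 2))) in *.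
    destruct (near_left s (fun t => kappa * (u0 * t + P Rr t)) a (a / 2) (cos gamma) (m / 4)) as [b [Hb1 [Hb2 Hb3]]];
      [lra | lra | exact Hlim | |].
    { apply (@ex_derive_continuous R_AbsRing R_NormedModule). eexists. apply dg; lra. }
    pose proof (HGpos (a / 2) b ltac:(lra) ltac:(lra) ltac:(lra)).
    apply Rabs_def2 in Hb2. apply Rabs_def2 in Hb3. fold m in H. simpl in Hb3. lra. }
  assert (HPa : 0 < P Rr a).
  { rewrite <- (HP0 Rr HRr).
    apply (incr_strict (P Rr) (fun t => Rr - sqrt (Rr ^ 2 - t ^ 2))); [lra| |].
    - intros t Ht. apply P_derive; lra.
    - intros t Ht. assert (sqrt (Rr ^ 2 - t ^ 2) < sqrt (Rr ^ 2)) by (apply sqrt_lt_1_alt; nra).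
      rewrite sqrt_pow2 in H; lra. }
  split; [| split].
  3:{ intros u0p Hu0p. rewrite F_P in Hu0p. fold Rr in Hu0p. split.
      - apply (Rmult_lt_reg_l a); [lra|]. apply (Rmult_lt_reg_l kappa); [lra|].
        replace (kappa * (a * u0p)) with (kappa * (a * u0p + P Rr a) - kappa * P Rr a) by ring.
        rewrite Hu0p. replace (kappa * (cos gamma / kappa)) with (cos gamma) by (field; lra). nra.
      - apply (Rmult_lt_reg_l a); [lra|]. apply (Rmult_lt_reg_l kappa); [lra|].
        replace (kappa * (a * u0p)) with (kappa * (a * u0p + P Rr a) - kappa * P Rr a) by ring.
        rewrite Hu0p. replace (kappa * (a * (cos gamma / (a * kappa)))) with (cos gamma) by (field; lra).
        replace (kappa * (cos gamma / kappa)) with (cos gamma) by (field; lra). nra. }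
  2:{ exists ((cos gamma / kappa - P Rr a) / a). rewrite F_P. fold Rr. field. lra. }
  clear HGpos HGm HB HPa Hlow HsR HaR.
  set (c := cos gamma) in *.
  set (rho := a / c).
  assert (Hrho : a <= rho) by (unfold rho; apply Rle_div_r; nra).
  assert (Hq : forall r, 0 < r < a -> s r < r * kappa * u r).
  { intros r Hr. enough (0 < r * kappa * u r - s r) by lra.
    replace 0 with (0 * kappa * u 0 - s 0) at 1 by (rewrite Hs0; ring).
    apply (incr_strict (fun t => t * kappa * u t - s t) (fun t => t * kappa * Derive u t)); [lra| |].
    - intros t Ht. assert (Hst := Hs t ltac:(lra)). assert (Hut := HuD t ltac:(lra)).
      auto_derive.
      + repeat split; auto; eexists; eauto.
      + set (d1 := Derive (fun x => u x) t). set (d2 := Derive (fun x => s x) t).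
        assert (E1 : d1 = Derive u t) by reflexivity.
        assert (E2 : d2 = kappa * u t) by (apply is_derive_unique; exact Hst).
        rewrite E1, E2. ring.
    - intros t Ht. pose proof (HDpos t ltac:(lra)). apply Rmult_lt_0_compat; [apply Rmult_lt_0_compat|]; lra. }
  assert (Hkk : forall r b, 0 < r -> r < b -> b < a -> b * s r < r * s b).
  { intros r b H1 H2 H3. enough (0 < r * s b - b * s r) by lra.
    replace 0 with (r * s r - r * s r) at 1 by ring.
    apply (incr_strict (fun t => r * s t - t * s r) (fun t => r * (kappa * u t) - s r)); [lra| |].
    - intros t Ht. apply dminus; [apply is_derive_scal; apply Hs; lra|].
      apply (is_derive_ext (fun x => s r * x)); [intros x; change (s r * x = x * s r); ring| apply dlin].
    - intros t Ht. pose proof (Hinc r t ltac:(lra) ltac:(lra) ltac:(lra)).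
      pose proof (Hq r ltac:(lra)). assert (0 < r * kappa * (u t - u r)) by (apply Rmult_lt_0_compat; [apply Rmult_lt_0_compat|]; lra). nra. }
  assert (Hup : forall r, 0 < r < a -> s r < r / rho).
  { intros r Hr. set (b0 := (r + a) / 2). set (M := s b0 / b0).
    assert (Hb0 : 0 < b0) by (unfold b0; lra).
    assert (HM : M <= c / a).
    { assert (Hge : forall b, b0 <= b < a -> 0 <= s b - b * M).
      { intros b Hb. unfold M. destruct (Req_dec b b0) as [->|Hn].
        - replace (b0 * (s b0 / b0)) with (s b0) by (field; lra). lra.
        - pose proof (Hkk b0 b Hb0 ltac:(lra) ltac:(lra)).
          replace (b * (s b0 / b0)) with ((b * s b0) / b0) by (field; lra).
          enough (b * s b0 / b0 <= s b) by lra. apply Rle_div_l; lra. }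
      destruct (Rle_dec M (c / a)) as [|Hn]; auto. exfalso.
      assert (Hd : 0 < a * M - c).
      { assert (Hca : c / a < M) by lra. apply (Rmult_lt_compat_l a) in Hca; [|lra]. replace (a * (c / a)) with c in Hca by (field; lra). lra. }
      destruct (near_left s (fun t => M * t) a b0 c ((a * M - c) / 4)) as [b [Hb1 [Hb2 Hb3]]];
        [unfold b0; lra | lra | exact Hlim | apply cont_lin |].
      pose proof (Hge b Hb1). apply Rabs_def2 in Hb2. apply Rabs_def2 in Hb3. nra. }
    pose proof (Hkk r b0 ltac:(lra) ltac:(unfold b0; lra) ltac:(unfold b0; lra)).
    assert (s r < r * M).
    { unfold M. replace (r * (s b0 / b0)) with ((r * s b0) / b0) by (field; lra).
      apply Rlt_div_r; lra. }
    replace (r / rho) with (r * (c / a)) by (unfold rho; field; lra).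
    assert (r * M <= r * (c / a)) by (apply Rmult_le_compat_l; lra). lra. }
  assert (Hrho0 : 0 < rho) by lra.
  assert (Hhigh : forall r, 0 < r < a -> u r < u0 + rho - sqrt (rho ^ 2 - r ^ 2)).
  { intros r Hr.
    enough (0 < (u0 + rho - sqrt (rho ^ 2 - r ^ 2)) - u r) by lra.
    replace 0 with ((u0 + rho - sqrt (rho ^ 2 - 0 ^ 2)) - u 0) at 1
      by (rewrite Hu00; replace (rho ^ 2 - 0 ^ 2) with (rho ^ 2) by ring; rewrite sqrt_pow2; lra).
    apply (incr_strict (fun t => (u0 + rho - sqrt (rho ^ 2 - t ^ 2)) - u t)
             (fun t => t / sqrt (rho ^ 2 - t ^ 2) - Derive u t)); [lra| |].
    - intros t Ht. apply dminus; [apply dcirc; lra | apply HuD; lra].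
    - intros t Ht. destruct (Halg t) as [H1 H2]. rewrite H2.
      assert (HS := sqrt_circ rho t Hrho0).
      replace (t / sqrt (rho ^ 2 - t ^ 2)) with ((t / rho) / sqrt (1 - (t / rho) ^ 2)).
      2:{ rewrite HS. assert (0 < sqrt (rho ^ 2 - t ^ 2)) by (apply sqrt_lt_R0; nra). field. lra. }
      assert (Hst := Hup t ltac:(lra)). assert (Hsp := Hspos t ltac:(lra)).
      assert (t / rho < 1) by (apply Rlt_div_l; lra).
      pose proof (phi_lt (s t) (t / rho)). lra. }
  assert (HHpos : forall x y, 0 <= x -> x <= y -> y < a ->
     kappa * (u0 * x + P rho x) - s x <= kappa * (u0 * y + P rho y) - s y).
  { intros x y H1 H2 H3.
    apply (incr_weak (fun t => kappa * (u0 * t + P rho t) - s t)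
      (fun t => kappa * (u0 + (rho - sqrt (rho ^ 2 - t ^ 2))) - kappa * u t)); [lra| |].
    - intros t Ht. apply dminus; [apply dg; lra | apply Hs; lra].
    - intros t Ht. pose proof (Hhigh t ltac:(lra)). nra. }
  assert (HHm : 0 < kappa * (u0 * (a / 2) + P rho (a / 2)) - s (a / 2)).
  { replace 0 with (kappa * (u0 * 0 + P rho 0) - s 0) by (rewrite Hs0, P0; auto; ring).
    apply (incr_strict (fun t => kappa * (u0 * t + P rho t) - s t)
      (fun t => kappa * (u0 + (rho - sqrt (rho ^ 2 - t ^ 2))) - kappa * u t)); [lra| |].
    - intros t Ht. apply dminus; [apply dg; lra | apply Hs; lra].
    - intros t Ht. pose proof (Hhigh t ltac:(lra)). nra. }
  assert (HC : c < kappa * (u0 * a + P rho a)).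
  { set (m := kappa * (u0 * (a / 2) + P rho (a / 2)) - s (a / 2)) in *.
    destruct (near_left s (fun t => kappa * (u0 * t + P rho t)) a (a / 2) c (m / 4)) as [b [Hb1 [Hb2 Hb3]]];
      [lra | lra | exact Hlim | |].
    { apply cR_mult; [apply continuous_const|]. apply cR_plus; [apply cont_lin|].
      apply P_cont; lra. }
    pose proof (HHpos (a / 2) b ltac:(lra) ltac:(lra) ltac:(lra)).
    apply Rabs_def2 in Hb2. apply Rabs_def2 in Hb3. fold m in H. simpl in Hb3. lra. }
  assert (Hsg : 0 <= sin gamma) by (apply sin_ge_0; lra).
  assert (Hasin : asin (a / rho) = PI / 2 - gamma).
  { replace (a / rho) with c by (unfold rho; field; lra). unfold c. rewrite <- sin_shift.
    apply asin_sin. pose proof PI_RGT_0. lra. }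
  assert (Hsq : sqrt (rho ^ 2 - a ^ 2) = a * tan gamma).
  { assert (Htan : 0 <= a * tan gamma).
    { unfold tan. fold c. apply Rmult_le_pos; [lra|]. apply Rdiv_le_0_compat; lra. }
    rewrite <- (sqrt_pow2 (a * tan gamma) Htan). f_equal.
    unfold rho, tan. fold c. pose proof (sin2_cos2 gamma) as H2. fold c in H2. unfold Rsqr in H2.
    field_simplify; [|lra|lra]. replace (sin gamma ^ 2) with (1 - c ^ 2) by nra. field. lra. }
  unfold P in HC. rewrite Hasin, Hsq in HC. unfold rho in HC.
  assert (Heq : u0 - (c / (a * kappa) - a / c + a * tan gamma / 2 + a / (2 * c ^ 2) * (PI / 2 - gamma))
     = (kappa * (u0 * a + (a / c * a - a / 2 * (a * tan gamma) - (a / c) ^ 2 / 2 * (PI / 2 - gamma))) - c) / (a * kappa)).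
  { field. lra. }
  assert (0 < (kappa * (u0 * a + (a / c * a - a / 2 * (a * tan gamma) - (a / c) ^ 2 / 2 * (PI / 2 - gamma))) - c) / (a * kappa)).
  { apply Rdiv_lt_0_compat; nra. }
  unfold rho. lra.
Qed.
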